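(* Let $P$ be a real signed permutation matrix (of any size $n\times n$) all of whose eigenvalues lie in the closed left half-plane $\{z\in\mathbb{C}:\operatorname{Re} z\le 0\}$. Then $P = R - E$, where $R$ is a real skew-symmetric matrix ($R^T=-R$) and $E$ is a diagonal matrix each of whose diagonal entries equals $0$ or $1$.
   Context: A real signed permutation matrix is a square matrix with all entries in $\{-1,0,+1\}$ having exactly one nonzero entry in each row and in each column. *)

(* Defs.v *)
(* matrices over an arbitrary real closed field R
   (e.g. the real numbers), complex numbers R[i] from mathcomp-real-closed. *)
From HB Require Import structures.
From mathcomp Require Import all_boot all_order all_algebra.
From mathcomp Require Export complex.
Set Implicit Arguments. Unset Strict Implicit. Unset Printing Implicit Defensive.
Import Order.TTheory GRing.Theory Num.Theory.
Local Open Scope ring_scope.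

Definition signed_perm_mx (R : numDomainType) (n : nat) (P : 'M[R]_n) : Prop :=
  [/\ forall i j, P i j \in [:: -1; 0; 1],
      forall i, #|[set j | P i j != 0]| = 1%N
    & forall j, #|[set i | P i j != 0]| = 1%N].

Definition cplx_mx (R : rcfType) (n : nat) (A : 'M[R]_n) : 'M[R[i]]_n :=
  map_mx (fun x => x%:C%C) A.

(* Main.v *)
Require Import Defs.
From HB Require Import structures.
From mathcomp Require Import all_boot all_order all_algebra.
From mathcomp Require Import complex.
Import Order.TTheory GRing.Theory Num.Theory.
Local Open Scope ring_scope.
From mathcomp Require Import fingroup perm.
From mathcomp Require Import ring.
Import Num.Def.
Section Roots.
Variable C : numClosedFieldType.

Lemma neg_unity_root' n : (n > 1)%N -> exists2 w : C, w ^+ n = 1 & 'Re w < 0.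
Proof.
move=> n_gt1; have [|w /eqP pw_0] := closed_rootP (\poly_(i < n) (1 : C)) _.
  by rewrite size_poly_eq ?oner_eq0 // -(subnKC n_gt1).
rewrite horner_poly (eq_bigr _ (fun _ _ => mul1r _)) in pw_0.
have wn1: w ^+ n = 1 by apply/eqP; rewrite -subr_eq0 subrX1 pw_0 mulr0.
suffices /existsP[i ltRwi0]: [exists i : 'I_n, 'Re (w ^+ i) < 0].
  by exists (w ^+ i) => //; rewrite exprAC wn1 expr1n.
apply: contra_eqT (congr1 (fun x : C => 'Re x) pw_0) => /existsPn geRw0.
rewrite /= raddf_sum raddf0 /= (bigD1 (Ordinal (ltnW n_gt1))) //=.
rewrite (Creal_ReP _ _) ?rpred1 // gt_eqF ?ltr_wpDr ?ltr01 //=.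
by apply: sumr_ge0 => i _; rewrite real_leNgt ?rpred0.
Qed.

Lemma odd_root k : odd k -> (k > 1)%N -> exists w : C, w ^+ k = -1 /\ 0 < 'Re w.
Proof.
move=> ok k1; have [c c1 cre] := @neg_unity_root' k k1.
exists (- c); rewrite exprNn c1 mulr1 -signr_odd ok expr1; split => //.
by rewrite raddfN /= oppr_gt0.
Qed.

Lemma sqrt_nonreal (b : C) : b \isn't Num.real ->
  exists w : C, [/\ w ^+ 2 = b, 0 < 'Re w & w \isn't Num.real].
Proof.
move=> nb; set r := sqrtC b.
have rb : r ^+ 2 = b by exact: sqrtCK.
have wr : r \isn't Num.real.
  by apply: contra nb => rr; rewrite -rb rpredX.
have Re0 : 'Re r != 0.
  apply: contra nb => /eqP R0; rewrite -rb (Crect r) R0 add0r exprMn sqrCi.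
  by rewrite mulN1r rpredN rpredX // Creal_Im.
have := Creal_Re r; rewrite realE le_eqVlt eq_sym (negPf Re0) /=.
case/orP => [Rp|]; first by exists r.
rewrite le_eqVlt (negPf Re0) /= => Rn.
exists (- r); rewrite sqrrN raddfN /= oppr_gt0; split => //.
by rewrite rpredN.
Qed.

Lemma even_nonreal_root m : (m > 1)%N -> exists b : C, b ^+ m = -1 /\ b \isn't Num.real.
Proof.
elim: m {-2}m (leqnn m) => [|N IH] m mN m1; first by case: m m1 mN.
have [om|em] := boolP (odd m).
  have [w [w1 wp]] := @odd_root m om m1; exists w; split => //.
  apply/negP => wr; have := wp; rewrite (Creal_ReP _ wr) => wp'.
  by have := exprn_gt0 m wp'; rewrite w1 ltr0N1.
have m2 : m = (m./2).*2 by rewrite -{1}(odd_double_half m) (negPf em).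
have [p2|p2] := leqP m./2 1.
  have -> : m = 2%N by move: m1 p2; rewrite m2; case: (m./2) => [|[|]].
  exists 'i; rewrite sqrCi; split => //.
  by rewrite realEsqr sqrCi oppr_ge0 ler10.
have hp : (m./2 <= N)%N.
  rewrite -ltnS; apply: leq_trans mN; rewrite {2}m2 -addnn.
  by rewrite -{1}[m./2]addn0 ltn_add2l; apply: ltn_trans p2.
have [b [b1 bn]] := IH m./2 hp p2.
have [w [w2 _ wn]] := @sqrt_nonreal b bn.
exists w; split => //; by rewrite m2 -muln2 mulnC exprM w2 b1.
Qed.

Lemma pos_root k : (2 < k)%N -> exists w : C, w ^+ k = -1 /\ 0 < 'Re w.
Proof.
move=> k2; have [ok|ek] := boolP (odd k); first exact: (@odd_root k ok (ltnW k2)).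
have m2 : k = (k./2).*2 by rewrite -{1}(odd_double_half k) (negPf ek).
have p2 : (1 < k./2)%N.
  move: k2; rewrite {1}m2; case: (k./2) => [|[|]] //.
have [b [b1 bn]] := @even_nonreal_root _ p2.
have [w [w2 wp _]] := @sqrt_nonreal b bn.
exists w; split => //; by rewrite m2 -muln2 mulnC exprM w2 b1.
Qed.
End Roots.

Section Main.
Variables (R : rcfType) (n : nat) (P : 'M[R]_n).

Lemma signed_struct : signed_perm_mx P ->
  exists (sg : {perm 'I_n}) (s : 'I_n -> R),
    (forall x, s x = 1 \/ s x = -1) /\
    (forall x y, P x y = if y == sg x then s x else 0).
Proof.
case=> Hval Hrow Hcol.
pose f i := odflt i [pick j | P i j != 0].
have fP i j : (P i j != 0) = (j == f i).
  have [j0 Hj0] := cards1P (introT eqP (Hrow i)).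
  have Hin j' : (P i j' != 0) = (j' == j0).
    by rewrite -in_set1 -Hj0 inE.
  rewrite /f; case: pickP => [j1 Hj1|H0] /=.
    by rewrite Hin; move: Hj1; rewrite Hin => /eqP ->.
  by move: (H0 j0); rewrite Hin eqxx.
have finj : injective f.
  move=> i1 i2 Heq.
  have [i0 Hi0] := cards1P (introT eqP (Hcol (f i1))).
  have Hin i' : (P i' (f i1) != 0) = (i' == i0).
    by rewrite -in_set1 -Hi0 inE.
  have h1 : P i1 (f i1) != 0 by rewrite fP.
  have h2 : P i2 (f i1) != 0 by rewrite fP Heq.
  by move: h1 h2; rewrite !Hin => /eqP -> /eqP ->.
exists (perm finj), (fun x => P x (f x)); split.
  move=> x; have := Hval x (f x); have : P x (f x) != 0 by rewrite fP.
  rewrite !inE => nz /or3P [] /eqP H; [by right|by rewrite H eqxx in nz|by left].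
move=> x y; rewrite permE; case: ifP => [/eqP -> //|Hy].
by apply/eqP; rewrite -[_ == 0]negbK fP Hy.
Qed.

Section Eig.
Variables (sg : {perm 'I_n}) (s : 'I_n -> R).
Hypothesis Hs : forall x, s x = 1 \/ s x = -1.
Hypothesis HP : forall x y, P x y = if y == sg x then s x else 0.

Lemma eig_cycle x (l : R[i]) :
  l ^+ (fingraph.order sg x) = \prod_(t < fingraph.order sg x) (s (iter t sg x))%:C%C ->
  eigenvalue (cplx_mx P) l.
Proof.
move=> Hl.
set k := fingraph.order sg x in Hl *.
pose c m := (\prod_(t < m) (s (iter t sg x))%:C%C) * l ^+ (k - m).
pose v : 'rV[R[i]]_n := \row_y (if fconnect sg x y then c (findex sg x y) else 0).
have Rel z : l * v 0 (sg z) = v 0 z * (s z)%:C%C.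
  rewrite !mxE -(same_fconnect1_r (@perm_inj _ sg)).
  case Hz: (fconnect sg x z); last by rewrite mul0r mulr0.
  have Hm := findex_max Hz.
  have Ez := iter_findex Hz.
  move: Hm Ez; set m := findex sg x z => Hm Ez.
  case: (ltngtP m.+1 k) => [lt|gt|eq].
  - have -> : findex sg x (sg z) = m.+1 by rewrite -Ez -iterS findex_iter.
    rewrite /c big_ord_recr /= Ez.
    have -> : (k - m = (k - m.+1).+1)%N by rewrite subnSK.
    rewrite exprS; ring.
  - by move: gt; rewrite ltnNge Hm.
  - have Hsz : sg z = x by rewrite -Ez -iterS eq (iter_order (@perm_inj _ sg)).
    rewrite Hsz findex0 /c big_ord0 mul1r subn0 Hl -eq big_ord_recr /= Ez.
    rewrite subSnn expr1; ring.
apply/eigenvalueP; exists v.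
  apply/rowP => y; rewrite !mxE (bigD1 ((sg^-1)%g y)) //= big1 => [|l' Hl'].
    rewrite !mxE HP permKV eqxx addr0.
    by have := Rel ((sg^-1)%g y); rewrite permKV !mxE => ->.
  rewrite !mxE HP; case: eqP => [Ey|]; last by rewrite mulr0.
  by move: Hl'; rewrite Ey permK eqxx.
apply/eqP => /rowP/(_ x); rewrite !mxE connect0 findex0 /c big_ord0 mul1r subn0 Hl.
apply/eqP; rewrite prodf_seq_neq0; apply/allP => t _ /=.
by rewrite eq_complex /=; case: (Hs (iter t sg x)) => ->; rewrite ?oppr_eq0 oner_eq0.
Qed.

Hypothesis Heig : forall z : R[i], eigenvalue (cplx_mx P) z -> complex.Re z <= 0.

Lemma cyc x : (sg x = x /\ s x = -1) \/
  (sg x != x /\ sg (sg x) = x /\ s x * s (sg x) = -1).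
Proof.
set k := fingraph.order sg x.
set S := \prod_(t < k) s (iter t sg x).
have HSC : \prod_(t < k) (s (iter t sg x))%:C%C = S%:C%C.
  by rewrite rmorph_prod.
have HS : S = 1 \/ S = -1.
  rewrite /S; apply: (big_ind (fun a : R => a = 1 \/ a = -1)); first by left.
    move=> a b [] -> [] ->; rewrite ?mulr1 ?mul1r ?mulrNN ?mulr1; by [left|right].
  by move=> t _; apply: Hs.
have nS1 : S <> 1.
  move=> E.
  have Hc : (1 : R[i]) ^+ k = \prod_(t < k) (s (iter t sg x))%:C%C.
    by rewrite expr1n HSC E.
  by have := Heig _ (@eig_cycle x 1 Hc); rewrite /= ler10.
have SN : S = -1 by case: HS.
have k3 : (k < 3)%N.
  rewrite ltnNge; apply/negP => k3.
  have [w [w1 wp]] := @pos_root R[i] k k3.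
  have Hc : w ^+ k = \prod_(t < k) (s (iter t sg x))%:C%C.
    by rewrite w1 HSC SN rmorphN1.
  have := Heig _ (@eig_cycle x w Hc); rewrite -complexRe ltcE /= in wp.
  rewrite eqxx /= in wp; by rewrite real_leNgt ?num_real // wp.
have k0 := fingraph.order_gt0 sg x; rewrite -/k in k0.
have Hit : iter k sg x = x := iter_order (@perm_inj _ sg) x.
have U := orbit_uniq sg x; rewrite /orbit -/k in U.
move: SN Hit U; rewrite /S; clear HSC HS nS1 S; clearbody k.
case: k k0 k3 => [|[|[|]]] //= _ _.
  by rewrite big_ord1 /= => -> ->; left.
rewrite big_ord_recr big_ord1 /= => Hp Hi; rewrite inE andbT => Hu.
right; split; [by rewrite eq_sym|split=> //].
Qed.
End Eig.

Lemma skew_entries (sg : {perm 'I_n}) (s : 'I_n -> R)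
  (Hs : forall x, s x = 1 \/ s x = -1)
  (HP : forall x y, P x y = if y == sg x then s x else 0)
  (C : forall x, (sg x = x /\ s x = -1) \/
     (sg x != x /\ sg (sg x) = x /\ s x * s (sg x) = -1))
  i j : i != j -> P j i = - P i j.
Proof.
move=> ij; rewrite !HP.
case: (eqVneq j (sg i)) => [Ej|nj].
  case: (C i) => [[E _]|[_ [E2 Hm]]].
    by move: ij; rewrite Ej E eqxx.
  rewrite Ej E2 eqxx.
  case: (Hs i) => E; rewrite E in Hm *; first by rewrite mul1r in Hm.
  by rewrite mulN1r in Hm; rewrite -Hm opprK.
case: (eqVneq i (sg j)) => [Ei|ni]; last by rewrite oppr0.
case: (C j) => [[E _]|[_ [E2 Hm]]].
  by move: ij; rewrite Ei E eqxx.
by move: nj; rewrite Ei E2 eqxx.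
Qed.
End Main.

Theorem lemma1 (R : rcfType) (n : nat) (P : 'M[R]_n) :
  signed_perm_mx P ->
  (forall z : R[i], eigenvalue (cplx_mx P) z -> complex.Re z <= 0) ->
  exists (S E : 'M[R]_n),
    [/\ S^T = - S,
        is_diag_mx E,
        forall k, E k k = 0 \/ E k k = 1
      & P = S - E].
Proof.
move=> Hsp Heig; have [sg [s [Hs HP]]] := @signed_struct R n P Hsp.
have C := @cyc R n P sg s Hs HP Heig.
have Sk := @skew_entries R n P sg s Hs HP C.
exists (\matrix_(i, j) if i == j then 0 else P i j),
       (\matrix_(i, j) if i == j then - P i i else 0).
split.
- apply/matrixP => i j; rewrite !mxE.
    case: (eqVneq i j) => [E|ne]; first by rewrite oppr0.
  by rewrite /= Sk.
- apply/is_diag_mxP => i j ne; rewrite mxE; case: eqP => // E.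
  by move: ne; rewrite E eqxx.
- move=> k; rewrite mxE eqxx HP.
  case: (C k) => [[E Es]|[ne _]]; first by rewrite E eqxx Es opprK; right.
  by rewrite eq_sym (negPf ne) oppr0; left.
- apply/matrixP => i j; rewrite !mxE; case: eqP => [->|_].
    by rewrite sub0r opprK.
  by rewrite subr0.
Qed.
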